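(* Let $\mathcal{M}$ be any $R\times K$ matrix with entries in a finite set $V$ and let $\hat v\subseteq V$. For each row $r$ let $z_r$ be the number of stretches of $\hat v$ in row $r$. For $0\le k<K$ define $$ls^+_k=\max(0,\#^{\hat v}_k-\#^{\hat v}_{k-1}),\qquad us^+_k=\#^{\hat v}_k-\max(0,\#^{\hat v}_{k-1}+\#^{\hat v}_k-R),$$ $$ls^-_k=\max(0,\#^{\hat v}_k-\#^{\hat v}_{k+1}),\qquad us^-_k=\#^{\hat v}_k-\max(0,\#^{\hat v}_{k+1}+\#^{\hat v}_k-R).$$ Then $$\sum_{k=0}^{K-1}ls^+_k\le\sum_{r=0}^{R-1}z_r\le\sum_{k=0}^{K-1}us^+_k\quad\text{and}\quad \sum_{k=0}^{K-1}ls^-_k\le\sum_{r=0}^{R-1}z_r\le\sum_{k=0}^{K-1}us^-_k.$$ Moreover, for each $k$, $ls^+_k$ and $us^+_k$ are respectively a lower and an upper bound on the number of stretches of $\hat v$ (over all rows) starting in column $k$, and $ls^-_k$, $us^-_k$ are respectively a lower and an upper bound on the number of stretches of $\hat v$ ending in column $k$.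
   Context: Columns are indexed $0,\ldots,K-1$ and rows $0,\ldots,R-1$. For $\hat v\subseteq V$ and a column $k$, $\#^{\hat v}_k$ denotes the number of rows $r$ with $\mathcal{M}_{r,k}\in\hat v$, with the convention $\#^{\hat v}_{-1}=\#^{\hat v}_{K}=0$. A stretch of $\hat v$ in row $r$ is a maximal (with respect to inclusion) interval $[a,b]$ of column indices such that $\mathcal{M}_{r,j}\in\hat v$ for all $a\le j\le b$; it starts in column $a$, ends in column $b$, and has length $b-a+1$. *)

(* Defs.v *)
From mathcomp Require Import all_boot.
Set Implicit Arguments. Unset Strict Implicit. Unset Printing Implicit Defensive.

Section Stretches.
Variables (V : finType) (R K : nat).
Implicit Types (M : 'I_R -> 'I_K -> V) (vh : {set V}).

(* #^{vh}_j for a column index j : nat; equals 0 when j >= K (so #_K = 0). *)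
Definition colcount M vh (j : nat) : nat :=
  #|[set r : 'I_R | [exists c : 'I_K, (val c == j) && (M r c \in vh)]]|.

(* #^{vh}_{k-1}, with the convention #_{-1} = 0. *)
Definition colcount_prev M vh (k : nat) : nat :=
  if k is k'.+1 then colcount M vh k' else 0.

Definition all_in M vh (r : 'I_R) (a b : 'I_K) : bool :=
  [forall j : 'I_K, ((a <= j) && (j <= b)) ==> (M r j \in vh)].

Definition is_stretch M vh (r : 'I_R) (a b : 'I_K) : bool :=
  [&& a <= b, all_in M vh r a b &
     [forall a' : 'I_K, forall b' : 'I_K,
        [&& a' <= a, b <= b' & all_in M vh r a' b'] ==> (a' == a) && (b' == b)]].

Definition stretches M vh (r : 'I_R) : {set 'I_K * 'I_K} :=
  [set p | is_stretch M vh r p.1 p.2].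

Definition nstretch M vh (r : 'I_R) : nat := #|stretches M vh r|.

Definition nstart M vh (k : 'I_K) : nat :=
  \sum_(r < R) #|[set p in stretches M vh r | p.1 == k]|.
Definition nend M vh (k : 'I_K) : nat :=
  \sum_(r < R) #|[set p in stretches M vh r | p.2 == k]|.

(* bounds; subtraction on nat is truncated, which coincides with the paper's
   formulas since all the differences below are taken inside max(0,.) or are
   nonnegative anyway. *)
Definition lsP M vh (k : 'I_K) : nat :=
  maxn 0 (colcount M vh k - colcount_prev M vh k).
Definition usP M vh (k : 'I_K) : nat :=
  colcount M vh k - maxn 0 (colcount_prev M vh k + colcount M vh k - R).
Definition lsM M vh (k : 'I_K) : nat :=
  maxn 0 (colcount M vh k - colcount M vh k.+1).
Definition usM M vh (k : 'I_K) : nat :=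
  colcount M vh k - maxn 0 (colcount M vh k.+1 + colcount M vh k - R).

End Stretches.

(* Main.v *)
Require Import Defs.
From mathcomp Require Import all_boot.
From mathcomp Require Import zify.

Section Proofs.
Variables (V : finType) (R K : nat) (M : 'I_R -> 'I_K -> V) (vh : {set V}).

Lemma all_inP (r : 'I_R) (a b : 'I_K) :
  reflect (forall j : 'I_K, a <= j <= b -> M r j \in vh) (all_in M vh r a b).
Proof.
apply: (iffP forallP) => [h j hj|h j]; first by move/implyP: (h j); apply.
by apply/implyP; apply: h.
Qed.

Lemma is_stretchP (r : 'I_R) (a b : 'I_K) :
  reflect [/\ a <= b, all_in M vh r a b &
     forall a' b' : 'I_K, a' <= a -> b <= b' -> all_in M vh r a' b' ->
       a' = a /\ b' = b] (is_stretch M vh r a b).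
Proof.
apply: (iffP and3P) => [[h1 h2 /forallP h3]|[h1 h2 h3]]; split=> //.
  move=> a' b' e1 e2 e3; move/forallP: (h3 a') => /(_ b') /implyP.
  by rewrite e1 e2 e3 => /(_ isT) /andP[/eqP -> /eqP ->].
apply/forallP=> a'; apply/forallP=> b'; apply/implyP=> /and3P[e1 e2 e3].
by case: (h3 a' b' e1 e2 e3) => -> ->; rewrite !eqxx.
Qed.

Definition Pv r (k : nat) := [exists j : 'I_K, (j.+1 == k) && (M r j \in vh)].
Definition Nx r (k : nat) := [exists j : 'I_K, (val j == k.+1) && (M r j \in vh)].

Lemma card_start (r : 'I_R) (k : 'I_K) :
  #|[set p in stretches M vh r | p.1 == k]| = ((M r k \in vh) && ~~ Pv r k).
Proof.
have [cond|ncond] := boolP ((M r k \in vh) && ~~ Pv r k).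
  case/andP: cond => Mk nP.
  have Pk : all_in M vh r k k.
    by apply/all_inP=> j /andP[h1 h2]; have -> : j = k by apply/val_inj/eqP; rewrite eqn_leq h1 h2.
  case: (@arg_maxnP _ k (fun j => all_in M vh r k j) val Pk) => b Pb bmax.
  have st : is_stretch M vh r k b.
    apply/is_stretchP; split=> //; first exact: bmax.
    move=> a' b' e1 e2 e3.
    have ea : a' = k.
      apply/val_inj/eqP; rewrite eqn_leq e1 /=; rewrite leqNgt; apply/negP=> lt.
      have hk : k.-1 < K by have := ltn_ord k; lia.
      move/existsPn: nP => /(_ (Ordinal hk)); rewrite /= negb_and.
      have -> : (k.-1).+1 == k by apply/eqP; lia.
      rewrite /=; move/all_inP: e3 => /(_ (Ordinal hk)) -> //=.
      have := bmax _ Pk; rewrite /geq /=; move: e2 lt; lia.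
    split=> //; subst a'.
    apply/val_inj/eqP; rewrite eqn_leq e2 andbT; exact: bmax.
  suff -> : [set p in stretches M vh r | p.1 == k] = [set (k, b)] by rewrite cards1.
  apply/setP=> -[a b']; rewrite !inE /=.
  apply/andP/eqP => [[st' /eqP ea]|[-> ->]]; last by rewrite eqxx st.
  subst a; congr pair.
  move/is_stretchP: st => [_ _ h]; move/is_stretchP: st' => [_ a2 h'].
  have [le|le] := leqP b b'.
    by case: (h k b' (leqnn _) le a2).
  by case: (h' k b (leqnn _) (ltnW le) Pb).
apply/eqP; rewrite cards_eq0; apply/eqP/setP=> -[a b]; rewrite !inE /=.
apply/negP=> /andP[st /eqP ea]; subst a; move/negP: ncond; apply.
move/is_stretchP: st => [h1 /all_inP h2 h3].
rewrite h2 ?leqnn ?h1 //=; apply/existsP=> -[j /andP[/eqP ej Mj]].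
have : all_in M vh r j b.
  apply/all_inP=> i /andP[i1 i2].
  have [e|ne] := eqVneq i j; first by rewrite e.
  apply: h2; rewrite i2 andbT.
  have : nat_of_ord i != nat_of_ord j by apply/eqP=> /val_inj; apply/eqP.
  lia.
move/(h3 j b); rewrite leqnn -ej leqnSn => /(_ isT isT) [ej' _].
by move: ej; rewrite ej'; lia.
Qed.

Lemma card_end (r : 'I_R) (k : 'I_K) :
  #|[set p in stretches M vh r | p.2 == k]| = ((M r k \in vh) && ~~ Nx r k).
Proof.
have [cond|ncond] := boolP ((M r k \in vh) && ~~ Nx r k).
  case/andP: cond => Mk nP.
  have Pk : all_in M vh r k k.
    by apply/all_inP=> j /andP[h1 h2]; have -> : j = k by apply/val_inj/eqP; rewrite eqn_leq h1 h2.
  case: (@arg_minnP _ k (fun j => all_in M vh r j k) val Pk) => a Pa amin.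
  have st : is_stretch M vh r a k.
    apply/is_stretchP; split=> //; first exact: amin.
    move=> a' b' e1 e2 e3.
    have eb : b' = k.
      apply/val_inj/eqP; rewrite eqn_leq e2 andbT; rewrite leqNgt; apply/negP=> lt.
      have hk : k.+1 < K by apply: leq_ltn_trans lt (ltn_ord b').
      move/existsPn: nP => /(_ (Ordinal hk)); rewrite /= negb_and eqxx /=.
      move/all_inP: e3 => /(_ (Ordinal hk)) -> //=.
      have := amin _ Pk; move: lt e1 => /= lt e1; lia.
    split=> //; subst b'.
    apply/val_inj/eqP; rewrite eqn_leq e1 /=; exact: amin.
  suff -> : [set p in stretches M vh r | p.2 == k] = [set (a, k)] by rewrite cards1.
  apply/setP=> -[a' b]; rewrite !inE /=.
  apply/andP/eqP => [[st' /eqP eb]|[-> ->]]; last by rewrite eqxx st.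
  subst b; congr pair.
  move/is_stretchP: st => [_ _ h]; move/is_stretchP: st' => [_ a2 h'].
  have [le|le] := leqP a a'.
    by case: (h' a k le (leqnn _) Pa).
  by case: (h a' k (ltnW le) (leqnn _) a2).
apply/eqP; rewrite cards_eq0; apply/eqP/setP=> -[a b]; rewrite !inE /=.
apply/negP=> /andP[st /eqP eb]; subst b; move/negP: ncond; apply.
move/is_stretchP: st => [h1 /all_inP h2 h3].
rewrite h2 ?leqnn ?h1 //=; apply/existsP=> -[j /andP[/eqP ej Mj]].
have : all_in M vh r a j.
  apply/all_inP=> i /andP[i1 i2].
  have [e|ne] := eqVneq i j; first by rewrite e.
  apply: h2; rewrite i1 /=.
  have : nat_of_ord i != nat_of_ord j by apply/eqP=> /val_inj; apply/eqP.
  move=> hh; move: (ej) => /= ej0; lia.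
move/(h3 a j); rewrite leqnn ej leqnSn => /(_ isT isT) [_ ej'].
by move: ej; rewrite ej' /=; lia.
Qed.

Definition A (k : 'I_K) := [set r : 'I_R | M r k \in vh].

Lemma colcountE (k : 'I_K) : colcount M vh k = #|A k|.
Proof.
apply: eq_card => r; rewrite !inE.
apply/existsP/idP => [[c /andP[/eqP/val_inj -> //]]|h].
by exists k; rewrite eqxx.
Qed.

Lemma prevE (k : 'I_K) : colcount_prev M vh k = #|[set r | Pv r k]|.
Proof.
rewrite /colcount_prev /Pv; case: k => [[|k'] hk] /=.
  apply/eqP; rewrite eq_sym cards_eq0; apply/eqP/setP=> r; rewrite !inE.
  by apply/negbTE/negP => /existsP[j]; rewrite ?andbF.
apply: eq_card => r; rewrite !inE; apply: eq_existsb => j.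
by [].
Qed.

Lemma nextE (k : 'I_K) : colcount M vh k.+1 = #|[set r | Nx r k]|.
Proof. by []. Qed.

Lemma nstartE (k : 'I_K) :
  nstart M vh k = #|A k :\: [set r | Pv r k]|.
Proof.
rewrite /nstart (eq_bigr _ (fun r _ => card_start r k)).
rewrite -sum1_card [RHS]big_mkcond /=; apply: eq_bigr => r _.
by rewrite !inE andbC; case: (_ && _).
Qed.

Lemma nendE (k : 'I_K) :
  nend M vh k = #|A k :\: [set r | Nx r k]|.
Proof.
rewrite /nend (eq_bigr _ (fun r _ => card_end r k)).
rewrite -sum1_card [RHS]big_mkcond /=; apply: eq_bigr => r _.
by rewrite !inE andbC; case: (_ && _).
Qed.

Lemma bounds (X B : {set 'I_R}) :
  #|X| - #|B| <= #|X :\: B| <= #|X| - maxn 0 (#|B| + #|X| - R).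
Proof.
rewrite cardsD.
have h1 : #|X :&: B| <= #|B| by apply: subset_leq_card; apply: subsetIr.
have h2 : #|X :&: B| <= #|X| by apply: subset_leq_card; apply: subsetIl.
have h3 := cardsU X B.
have h4 : #|X :|: B| <= R by have := max_card (mem (X :|: B)); rewrite card_ord.
lia.
Qed.

Lemma sum_start : \sum_(r < R) nstretch M vh r = \sum_(k < K) nstart M vh k.
Proof.
rewrite /nstart exchange_big /=; apply: eq_bigr => r _.
rewrite /nstretch -sum1_card (partition_big (fun p : 'I_K * 'I_K => p.1) xpredT) //=.
apply: eq_bigr => k _; rewrite -sum1_card; apply: eq_bigl => p; by rewrite !inE.
Qed.

Lemma sum_end : \sum_(r < R) nstretch M vh r = \sum_(k < K) nend M vh k.
Proof.
rewrite /nend exchange_big /=; apply: eq_bigr => r _.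
rewrite /nstretch -sum1_card (partition_big (fun p : 'I_K * 'I_K => p.2) xpredT) //=.
apply: eq_bigr => k _; rewrite -sum1_card; apply: eq_bigl => p; by rewrite !inE.
Qed.

Lemma startB (k : 'I_K) : lsP M vh k <= nstart M vh k <= usP M vh k.
Proof.
rewrite /lsP /usP nstartE colcountE prevE max0n.
by have := bounds (A k) [set r | Pv r k].
Qed.

Lemma endB (k : 'I_K) : lsM M vh k <= nend M vh k <= usM M vh k.
Proof.
rewrite /lsM /usM nendE colcountE nextE max0n.
by have := bounds (A k) [set r | Nx r k].
Qed.

End Proofs.

Theorem mainTheorem12 (V : finType) (R K : nat) (M : 'I_R -> 'I_K -> V)
    (vh : {set V}) :
  [/\ \sum_(k < K) lsP M vh k <= \sum_(r < R) nstretch M vh r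
        <= \sum_(k < K) usP M vh k,
      \sum_(k < K) lsM M vh k <= \sum_(r < R) nstretch M vh r
        <= \sum_(k < K) usM M vh k,
      forall k : 'I_K, lsP M vh k <= nstart M vh k <= usP M vh k
    & forall k : 'I_K, lsM M vh k <= nend M vh k <= usM M vh k].
Proof.
split; [| | exact: startB | exact: endB].
  rewrite sum_start; apply/andP; split; apply: leq_sum => k _;
  by case/andP: (@startB _ _ _ M vh k).
rewrite sum_end; apply/andP; split; apply: leq_sum => k _;
by case/andP: (@endB _ _ _ M vh k).
Qed.
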